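(* Under the setting below, for every $\tau\in[0,\bar\tau)$ one has $$B(\tau)=A(\tau)+(2e^{-\delta\tau}-1)S^*(\tau)\beta'(S^*(\tau)),$$ hence $B(\tau)<A(\tau)$; in particular $\lambda=0$ is never a root of $\lambda+A(\tau)-B(\tau)e^{-\lambda\tau}=0$. Moreover, if this equation has a purely imaginary root $i\omega$ for some $\tau\in[0,\bar\tau)$, then $A(\tau)<|B(\tau)|$ (so $B(\tau)<0$), which is equivalent to $$\frac{4\delta e^{-\delta\tau}}{2e^{-\delta\tau}-1}+(2e^{-\delta\tau}-1)\,\chi\!\left(\beta^{-1}\!\Big(\frac{\delta}{2e^{-\delta\tau}-1}\Big)\right)<0,\qquad \chi(y):=y\beta'(y).$$
   Context: Let $\delta>0$ and $\beta:[0,+\infty)\to(0,+\infty)$ continuously differentiable, strictly decreasing, with $\beta'(s)<0$ for $s>0$, $\lim_{S\to+\infty}\beta(S)=0$, and assume $\delta<\beta(0)$. Let $\bar\tau:=\frac1\delta\ln\!\big(\frac{2\beta(0)}{\delta+\beta(0)}\big)$, $\beta^{-1}:(0,\beta(0)]\to[0,\infty)$ the inverse of $\beta$. For $\tau\in[0,\bar\tau)$ set $S^*(\tau)=\beta^{-1}\!\big(\frac{\delta}{2e^{-\delta\tau}-1}\big)$, $N^*(\tau)=(2e^{-\delta\tau}-1)e^{\delta\tau}S^*(\tau)$, $A(\tau)=\delta+\beta(S^*(\tau))$ and $B(\tau)=[2\beta(S^*(\tau))+N^*(\tau)\beta'(S^*(\tau))]e^{-\delta\tau}$. *)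

(* Defs.v *)
From Stdlib Require Import Reals Lra.
Open Scope R_scope.

Definition beta_hyp (delta : R) (beta beta' : R -> R) : Prop :=
  (forall s, 0 <= s -> 0 < beta s) /\
  (forall s, 0 < s -> derivable_pt_lim beta s (beta' s)) /\
  (forall eps, 0 < eps -> exists d, 0 < d /\
     forall h, 0 < h < d -> Rabs ((beta h - beta 0) / h - beta' 0) < eps) /\
  (forall s, 0 <= s -> forall eps, 0 < eps -> exists d, 0 < d /\
     forall t, 0 <= t -> Rabs (t - s) < d -> Rabs (beta' t - beta' s) < eps) /\
  (forall s t, 0 <= s -> s < t -> beta t < beta s) /\
  (forall s, 0 < s -> beta' s < 0) /\
  (forall eps, 0 < eps -> exists M, forall S, M <= S -> Rabs (beta S) < eps) /\
  0 < delta /\ delta < beta 0.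

Definition is_beta_inv (beta binv : R -> R) : Prop :=
  forall y, 0 < y <= beta 0 -> 0 <= binv y /\ beta (binv y) = y.

Definition taubar (delta : R) (beta : R -> R) : R :=
  / delta * ln (2 * beta 0 / (delta + beta 0)).

Definition Sstar (delta : R) (binv : R -> R) (tau : R) : R :=
  binv (delta / (2 * exp (- delta * tau) - 1)).

Definition Nstar (delta : R) (binv : R -> R) (tau : R) : R :=
  (2 * exp (- delta * tau) - 1) * exp (delta * tau) * Sstar delta binv tau.

Definition Acoef (delta : R) (beta binv : R -> R) (tau : R) : R :=
  delta + beta (Sstar delta binv tau).

Definition Bcoef (delta : R) (beta beta' binv : R -> R) (tau : R) : R :=
  (2 * beta (Sstar delta binv tau)
     + Nstar delta binv tau * beta' (Sstar delta binv tau)) * exp (- delta * tau).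

Definition chi (beta' : R -> R) (y : R) : R := y * beta' y.

(* Main.v *)
Require Import Defs.
From Stdlib Require Import Reals Lra.
Open Scope R_scope.

Theorem mainTheorem8 (delta : R) (beta beta' binv : R -> R)
  (Hb : beta_hyp delta beta beta') (Hinv : is_beta_inv beta binv) :
  forall tau, 0 <= tau < taubar delta beta ->
    let A := Acoef delta beta binv tau in
    let B := Bcoef delta beta beta' binv tau in
    let c := 2 * exp (- delta * tau) - 1 in
    let S := Sstar delta binv tau in
    B = A + c * S * beta' S /\
    B < A /\
    (0 + A - B * exp (- 0 * tau) <> 0) /\
    (forall omega : R,
        A - B * cos (omega * tau) = 0 ->
        omega + B * sin (omega * tau) = 0 ->
        A < Rabs B /\ B < 0) /\
    (A < Rabs B <->
       4 * delta * exp (- delta * tau) / c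
       + c * chi beta' (binv (delta / c)) < 0).
Proof.
  destruct Hb as [Hpos [_ [_ [_ [Hdec [Hder [_ [Hd0 Hdb]]]]]]]].
  intros tau [Ht0 Ht1] A B c S.
  set (E := exp (- delta * tau)).
  assert (Hb0 : 0 < beta 0) by (apply Hpos; lra).
  set (X := 2 * beta 0 / (delta + beta 0)).
  assert (HX : 0 < X) by (unfold X; apply Rdiv_lt_0_compat; lra).
  assert (H1 : delta * tau < ln X).
  { unfold taubar in Ht1. fold X in Ht1.
    apply Rmult_lt_compat_l with (r := delta) in Ht1; [|lra].
    rewrite <- Rmult_assoc, Rinv_r in Ht1; lra. }
  assert (H2 : exp (delta * tau) < X).
  { rewrite <- (exp_ln X HX). apply exp_increasing. exact H1. }
  assert (HEe : E * exp (delta * tau) = 1).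
  { unfold E. rewrite <- exp_plus. replace (- delta * tau + delta * tau) with 0 by ring.
    apply exp_0. }
  assert (Hep : 0 < exp (delta * tau)) by apply exp_pos.
  assert (HE : (delta + beta 0) / (2 * beta 0) < E).
  { assert (E = / exp (delta * tau)) by (field_simplify_eq; [lra|lra]).
    rewrite H. unfold X in H2.
    apply Rmult_lt_reg_r with (r := exp (delta * tau)); [lra|].
    rewrite Rinv_l by lra.
    apply Rmult_lt_reg_r with (r := 2 * beta 0); [lra|].
    unfold Rdiv. field_simplify; [|lra].
    apply (Rmult_lt_compat_l (delta + beta 0)) in H2; [|lra].
    unfold Rdiv in H2. field_simplify in H2; lra. }
  assert (Hc : delta / beta 0 < c).
  { unfold c. fold E.
    apply (Rmult_lt_compat_l (2 * beta 0)) in HE; [|lra].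
    unfold Rdiv in *. field_simplify in HE; [|lra].
    apply Rmult_lt_reg_r with (r := beta 0); [lra|].
    field_simplify; lra. }
  assert (Hdp : 0 < delta / beta 0) by (apply Rdiv_lt_0_compat; lra).
  assert (Hcp : 0 < c) by lra.
  assert (Hy : 0 < delta / c <= beta 0).
  { split. apply Rdiv_lt_0_compat; lra.
    apply Rmult_le_reg_r with (r := c); [lra|].
    unfold Rdiv. rewrite Rmult_assoc, Rinv_l by lra.
    apply (Rmult_lt_compat_l (beta 0)) in Hc; [|lra].
    unfold Rdiv in Hc. field_simplify in Hc; lra. }
  destruct (Hinv _ Hy) as [HS0 HbS].
  assert (HSdef : S = binv (delta / c)) by reflexivity.
  rewrite <- HSdef in HS0, HbS.
  assert (HSlt : delta / c < beta 0).
  { apply Rmult_lt_reg_r with (r := c); [lra|].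
    unfold Rdiv. rewrite Rmult_assoc, Rinv_l by lra.
    apply (Rmult_lt_compat_l (beta 0)) in Hc; [|lra].
    unfold Rdiv in Hc. field_simplify in Hc; lra. }
  assert (HSp : 0 < S).
  { destruct HS0 as [HS0|HS0]; auto. rewrite <- HS0 in HbS. lra. }
  assert (Hbd : beta' S < 0) by (apply Hder; exact HSp).
  assert (HbSc : beta S * c = delta).
  { rewrite HbS. field. lra. }
  assert (HBeq : B = A + c * S * beta' S).
  { unfold B, A, Bcoef, Acoef, Nstar. fold S. fold E. fold c.
    unfold c in HbSc |- *. fold E in HbSc |- *.
    set (F := exp (delta * tau)) in *.
    replace ((2 * beta S + (2 * E - 1) * F * S * beta' S) * E)
      with (2 * beta S * E + (2 * E - 1) * S * beta' S * (E * F)) by ring.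
    rewrite HEe. nra. }
  assert (Hneg : c * S * beta' S < 0).
  { assert (0 < c * S) by (apply Rmult_lt_0_compat; lra). nra. }
  assert (HBA : B < A) by lra.
  assert (HApos : 0 < A).
  { unfold A, Acoef. fold S. pose proof (Hpos S ltac:(lra)). lra. }
  split; [exact HBeq|]. split; [exact HBA|]. split.
  { replace (- 0 * tau) with 0 by ring. rewrite exp_0. lra. }
  split.
  { intros omega Hre Him.
    assert (HAB : A < Rabs B).
    { pose proof (COS_bound (omega * tau)) as [Hc1 Hc2].
      assert (HA1 : A = B * cos (omega * tau)) by lra.
      destruct (Rle_or_lt (Rabs B) A) as [Hle|]; [|assumption].
      exfalso.
      unfold Rabs in Hle. destruct (Rcase_abs B).
      - (* B < 0, A = B cos <= -B ; so cos = -1 *)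
        assert (cos (omega * tau) = -1) by nra.
        pose proof (sin2_cos2 (omega * tau)). unfold Rsqr in H0.
        assert (sin (omega * tau) = 0) by nra.
        assert (omega = 0) by nra. subst omega.
        rewrite Rmult_0_l, cos_0 in H. lra.
      - assert (B * cos (omega * tau) <= B) by nra. lra. }
    split; [exact HAB|].
    unfold Rabs in HAB. destruct (Rcase_abs B); lra. }
  rewrite <- HSdef. unfold chi.
  assert (H4 : 4 * delta * E / c = 2 * delta + 2 * beta S).
  { rewrite HbS. unfold c. unfold c in Hcp. fold E in Hcp |- *. field_simplify_eq; [ring|lra]. }
  fold E. rewrite H4.
  assert (HA : A = delta + beta S) by reflexivity.
  unfold Rabs. destruct (Rcase_abs B); split; intro; nra.
Qed.
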